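(* Let $n\in\mathbb{N}$ and $S_{n,-1}(x)=\sum_{k=0}^n\Big(\binom{n}{k}x^k(1-x)^{n-k}\Big)^2$ for $x\in[0,1]$. Then $$S_{n,-1}^{(2j)}\!\left(\tfrac12\right)>0,\qquad j=0,1,\dots,n.$$
   Context: $S_{n,-1}^{(m)}$ denotes the $m$-th derivative of the polynomial $S_{n,-1}$. *)

(* Defs.v *)
From mathcomp Require Import all_boot all_order all_algebra.
Set Implicit Arguments. Unset Strict Implicit. Unset Printing Implicit Defensive.
Import GRing.Theory Num.Theory.
Local Open Scope ring_scope.

Definition S_nm1 (R : realFieldType) (n : nat) : {poly R} :=
  \sum_(k < n.+1) ('C(n, k)%:R *: ('X ^+ k * (1 - 'X) ^+ (n - k))) ^+ 2.

(* Main.v *)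
Require Import Defs.
From mathcomp Require Import all_boot all_order all_algebra.
From mathcomp Require Import ring lra zify.
Import GRing.Theory Num.Theory.
Local Open Scope ring_scope.

Lemma derivn_horner (K : comNzRingType) (p : {poly K}) c m :
  (p^`(m)).[c] = (p \Po ('X + c%:P))`_m *+ m`!.
Proof.
have H : (p \Po ('X + c%:P))^`(m) = p^`(m) \Po ('X + c%:P).
  elim: m => [|m IH]; first by rewrite !derivn0.
  rewrite !derivnS IH deriv_comp derivD derivX derivC addr0 mulr1 //.
have := congr1 (fun q : {poly K} => q.[0]) H.
rewrite /= horner_comp hornerD hornerX hornerC add0r => <-.
by rewrite horner_coef0 coef_derivn addn0 ffactnn.
Qed.

Lemma coef_binom (K : comNzRingType) (a b : K) n i : (i <= n)%N ->
  ((a%:P * 'X + b%:P)^+n)`_i = a^+i * b^+(n-i) *+ 'C(n,i).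
Proof.
move=> hi.
have -> : (a%:P * 'X + b%:P)^+n = \poly_(i < n.+1) (a^+i * b^+(n-i) *+ 'C(n,i)).
  rewrite addrC exprDn poly_def; apply: eq_bigr => k _.
  rewrite -mul_polyC polyCMn polyCM !rmorphXn exprMn.
  rewrite -!mulrnAl; ring.
by rewrite coef_poly ltnS hi.
Qed.

Section P1.
Variable R : realFieldType.


Definition F (a b : nat) : {poly R} := (1 + 'X)^+a * ('X - 1)^+b.
Definition E a b N : R := (F a b)`_N.
Definition h : R := 2^-1.

Lemma hh : h + h = 1.
Proof. by rewrite /h; field. Qed.

Lemma coefW a b N : (((1 + 'X)^+a * ('X - 1)^+b : {poly {poly R}})`_N) = (E a b N)%:P.
Proof.
have e1 : (1 + 'X : {poly {poly R}}) = (1 + 'X : {poly R})^:P by rewrite rmorphD rmorph1 /= map_polyX.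
have e2 : ('X - 1 : {poly {poly R}}) = ('X - 1 : {poly R})^:P by rewrite rmorphB rmorph1 /= map_polyX.
by rewrite e1 e2 -!rmorphXn -rmorphM coef_map.
Qed.

Lemma T_formula n : S_nm1 R n \Po ('X + h%:P) =
  \sum_(j < n.+1) (('C(n,j)%:R * h^+(2 * (n - j)) * (-1)^+j * E (2 * (n - j)) (2 * j) n) *: 'X^(2 * j)).
Proof.
set u : {poly R} := 'X + h%:P; set v : {poly R} := h%:P - 'X.
have -> : S_nm1 R n \Po ('X + h%:P) = \sum_(k < n.+1) ('C(n,k)%:R *: (u^+k * v^+(n-k)))^+2.
  rewrite /S_nm1 rmorph_sum; apply: eq_bigr => k _.
  rewrite rmorphXn /= comp_polyZ rmorphM /= !rmorphXn /= rmorphB /= rmorph1 comp_polyX.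
  congr ((_ *: (_ * _ ^+ _)) ^+ 2).
  have -> : (1 : {poly R}) = h%:P + h%:P by rewrite -polyCD hh.
  by rewrite /v; ring.
have -> : \sum_(k < n.+1) ('C(n,k)%:R *: (u^+k * v^+(n-k)))^+2 =
   ((u%:P * 'X + v%:P)^+n * (v%:P * 'X + u%:P)^+n)`_n.
  rewrite coefM; apply: eq_bigr => k _.
  have hk : (k <= n)%N by rewrite -ltnS.
  rewrite coef_binom // coef_binom ?leq_subr // subKn // bin_sub //.
  rewrite -mul_polyC polyC_natr; ring.
rewrite -exprMn.
have -> : (u%:P * 'X + v%:P) * (v%:P * 'X + u%:P) =
    (h^+2)%:P%:P * (1 + 'X)^+2 - ('X ^+ 2 : {poly R})%:P * ('X - 1)^+2.
  rewrite /u /v !rmorphD ?rmorphB ?rmorphN !rmorphXn. ring.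
rewrite exprBn coef_sum; apply: eq_bigr => j _.
have e : (-1)^+j * ((h^+2)%:P%:P * (1+'X)^+2)^+(n-j) * (('X ^+ 2 : {poly R})%:P * ('X-1)^+2)^+j
   = ((((-1)^+j * h^+(2 * (n - j)))%:P * 'X^(2 * j))%:P) * ((1 + 'X)^+(2 * (n - j)) * ('X - 1)^+(2 * j)).
  rewrite !exprM.
  move: (n - j)%N => m.
  rewrite !rmorphM !rmorphXn !rmorphN !rmorph1 !exprMn.
  ring.
rewrite e coefMn coefCM coefW.
by rewrite -mul_polyC !rmorphM rmorph_nat; ring.
Qed.

Lemma R1 p q N : E p.+2 q N.+1 = E p q.+2 N.+1 + 4 * E p q N.
Proof.
rewrite /E; have -> : F p.+2 q = F p q.+2 + ('X * F p q) *+ 4.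
  rewrite /F !exprS.
  move: ((1 + 'X)^+p) (('X - 1 : {poly R})^+q) => a b. ring.
by rewrite coefD coefMn coefXM /= mulr_natl.
Qed.

Lemma R2 p q : (2 * p + 1)%:R * E (2 * p) (2 * q).+2 (p + q).+1
   + (2 * q + 1)%:R * E (2 * p).+2 (2 * q) (p + q).+1 = 0.
Proof.
set G := F (2 * p).+1 (2 * q).+1.
have H : ('X * G^`() - G *+ (p + q).+1) *+ 2 =
   F (2 * p) (2 * q).+2 *+ (2 * p + 1) + F (2 * p).+2 (2 * q) *+ (2 * q + 1).
  rewrite mulrnBl -mulrnA.
  have -> : ((p + q).+1 * 2 = 2 * p + 2 * q + 2)%N by lia.
  rewrite /G /F.
  move: (2 * p)%N (2 * q)%N => m k.
  rewrite derivM !deriv_exp /=.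
  have -> : (1 + 'X : {poly R})^`() = 1 by rewrite derivD derivX -[1]/(1%:P) derivC add0r.
  have -> : ('X - 1 : {poly R})^`() = 1 by rewrite derivB derivX -[1]/(1%:P) derivC subr0.
  set x := (1 + 'X : {poly R}); set y := ('X - 1 : {poly R}).
  have e1 n : x ^+ n.+1 = x ^+ n * x := exprSr x n.
  have e2 n : y ^+ n.+1 = y ^+ n * y := exprSr y n.
  rewrite !(e1, e2) /=.
  move: (x ^+ m) (y ^+ k) => a b.
  rewrite /x /y; clear.
  ring.
have := congr1 (fun r : {poly R} => r`_(p + q).+1) H.
rewrite /= coefMn coefB coefXM /= coef_deriv coefMn subrr mul0rn.
by rewrite coefD !coefMn /E !mulr_natl => <-.
Qed.

Lemma coef_T n i : (i <= n)%N -> (S_nm1 R n \Po ('X + h%:P))`_(2 * i) =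
  'C(n,i)%:R * h^+(2 * (n - i)) * (-1)^+i * E (2 * (n - i)) (2 * i) n.
Proof.
move=> hi; rewrite T_formula coef_sum.
have hi' : (i < n.+1)%N by [].
rewrite (bigD1 (Ordinal hi')) //= coefZ coefXn eqxx mulr1 big1 ?addr0 // => k hk.
rewrite coefZ coefXn.
have -> : (2 * i == 2 * k)%N = false.
  apply/negbTE; move: hk; apply: contra; rewrite eqn_pmul2l // => /eqP e.
  by apply/eqP/val_inj => /=; rewrite e.
by rewrite mulr0.
Qed.

Lemma aux1 (A B C s P Q : R) : 0 <= P -> 0 <= Q -> A = B + 4 * C ->
  (2 * P + 1) * B + (2 * Q + 1) * A = 0 -> 0 < s * C -> 0 < s * A.
Proof.
move=> hP hQ e1 e2 hC.
have e3 : (s * A) * (2 * P + 2 * Q + 2) = 4 * (2 * P + 1) * (s * C).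
  rewrite e1 in e2 *.
  transitivity (s * ((2 * P + 1) * B + (2 * Q + 1) * (B + 4 * C)) + 4 * (2 * P + 1) * (s * C)); first ring.
  by rewrite e2 mulr0 add0r.
have hD : 0 < 2 * P + 2 * Q + 2 by lra.
rewrite -(pmulr_lgt0 _ hD) e3; apply: mulr_gt0 => //; lra.
Qed.

Lemma aux2 (A B s P Q : R) : 0 <= P -> 0 <= Q ->
  (2 * P + 1) * B + (2 * Q + 1) * A = 0 -> 0 < s * A -> 0 < - (s * B).
Proof.
move=> hP hQ e hA.
have e3 : (- (s * B)) * (2 * P + 1) = (2 * Q + 1) * (s * A).
  transitivity ((2 * Q + 1) * (s * A) - s * ((2 * P + 1) * B + (2 * Q + 1) * A)); first ring.
  by rewrite e mulr0 subr0.
have hD : 0 < 2 * P + 1 by lra.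
rewrite -(pmulr_lgt0 _ hD) e3; apply: mulr_gt0 => //; lra.
Qed.

Lemma L1 p q : 0 < (-1)^+q * E (2 * p) (2 * q) (p+q) ->
  0 < (-1)^+q * E (2 * p.+1) (2 * q) (p.+1+q).
Proof.
have -> : (2 * p.+1 = (2 * p).+2)%N by lia.
rewrite addSn => hC.
have r2 := R2 p q. rewrite !natrD in r2.
apply: (aux1 (E (2 * p).+2 (2 * q) (p + q).+1) (E (2 * p) (2 * q).+2 (p + q).+1)
   (E (2 * p) (2 * q) (p + q)) ((-1)^+q) p%:R q%:R) => //.
all: rewrite ?ler0n //.
  exact: R1.
have -> : (2 * p%:R + 1 : R) = p%:R + (p%:R + 0) + 1 by ring.
have -> : (2 * q%:R + 1 : R) = q%:R + (q%:R + 0) + 1 by ring.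
exact: r2.
Qed.

Lemma L2 p q : 0 < (-1)^+q * E (2 * p.+1) (2 * q) (p.+1+q) ->
  0 < (-1)^+q.+1 * E (2 * p) (2 * q.+1) (p+q.+1).
Proof.
have -> : (2 * p.+1 = (2 * p).+2)%N by lia.
have -> : (2 * q.+1 = (2 * q).+2)%N by lia.
rewrite addSn addnS => hA.
have r2 := R2 p q. rewrite !natrD in r2.
rewrite exprS mulN1r mulNr.
apply: (aux2 (E (2 * p).+2 (2 * q) (p + q).+1) (E (2 * p) (2 * q).+2 (p + q).+1)
   ((-1)^+q) p%:R q%:R) => //.
all: rewrite ?ler0n //.
have -> : (2 * p%:R + 1 : R) = p%:R + (p%:R + 0) + 1 by ring.
have -> : (2 * q%:R + 1 : R) = q%:R + (q%:R + 0) + 1 by ring.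
exact: r2.
Qed.

Lemma Jpos q p : 0 < (-1)^+q * E (2 * p) (2 * q) (p+q).
Proof.
elim: q p => [|q IHq] p.
  elim: p => [|p IHp].
    by rewrite /E /F !expr0 !mul1r addn0 coef1 eqxx ltr0n.
  by move: (L1 p 0 IHp); rewrite !muln0.
exact: L2 p q (IHq p.+1).
Qed.

End P1.

Theorem mainTheorem5 (R : realFieldType) (n j : nat) :
  (j <= n)%N -> 0 < ((S_nm1 R n)^`(2 * j)).[2^-1].
Proof.
move=> hj.
rewrite derivn_horner.
have -> : (2^-1 : R) = h R by [].
rewrite coef_T // pmulrn_lgt0 ?fact_gt0 //.
rewrite -mulrA; apply: mulr_gt0; first apply: mulr_gt0.
- by rewrite ltr0n bin_gt0.
- by apply: exprn_gt0; rewrite /h invr_gt0 ltr0n.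
- by have := @Jpos R j (n - j); rewrite subnK.
Qed.
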